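(* Let $\mathcal{V}$ be a variety and let $e$ be a unary term of $\mathcal{V}$ with $\mathcal{V}\models e(e(x))=e(x)$. Let $\mathcal{S}$ be the full subcategory of $\mathcal{V}$ whose objects are the algebras in $\mathcal{V}$ separated by $e$, and let $\mathcal{D}$ be the full subcategory of $\mathcal{S}$ whose objects are the algebras in $\mathcal{S}$ for which $e$ is dense. Then: (1) $e(\mathcal{D})=e(\mathcal{S})$ (where $e(\mathcal{K})=\{e(\mathbf{A}):\mathbf{A}\in\mathcal{K}\}$), and this class is a prevariety (closed under isomorphic images, subalgebras and products); (2) the localization functor $e$ (sending $\mathbf{A}\mapsto e(\mathbf{A})$ and a homomorphism $\varphi:\mathbf{B}\to\mathbf{C}$ to $\varphi|_{e(B)}:e(\mathbf{B})\to e(\mathbf{C})$) is a categorical equivalence from $\mathcal{D}$ to the full category on $e(\mathcal{D})$.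
   Context: For an algebra $\mathbf{A}$ and a unary term $e$ with $\mathbf{A}\models e(e(x))=e(x)$, the localization $e(\mathbf{A})$ is the algebra with universe $e(A)$ whose fundamental operation symbols are the symbols $et$, one for each term $t$ in the language of $\mathbf{A}$, where $et$ is interpreted as the restriction to $e(A)$ of the term operation $e(t(x_1,\dots,x_n))$ of $\mathbf{A}$. The term $e$ separates $\mathbf{A}$ if for all $a\neq b$ in $A$ there is a unary term $g$ with $e(g(a))\neq e(g(b))$. The term $e$ is dense for $\mathbf{A}$ if $\mathbf{A}$ is generated by $e(A)$. *)

(* Defs.v *)
From mathcomp Require Import ssreflect ssrfun ssrbool eqtype ssrnat fintype.
Set Implicit Arguments.
Unset Strict Implicit.
Unset Printing Implicit Defensive.

Record signature := Signature { sym : Type; ar : sym -> nat }.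

Inductive term (S : signature) (X : Type) : Type :=
| Var : X -> term S X
| App : forall f : sym S, ('I_(ar f) -> term S X) -> term S X.
Arguments Var {S X} x.
Arguments App {S X} f args.

Record algebra (S : signature) := Algebra {
  carrier :> Type;
  op : forall f : sym S, ('I_(ar f) -> carrier) -> carrier }.
Arguments op {S} a f _ : rename.

Fixpoint eval (S : signature) (A : algebra S) (X : Type) (env : X -> A)
  (t : term S X) : A :=
  match t with
  | Var x => env x
  | App f args => op A f (fun i => @eval S A X env (args i))
  end.
Arguments eval {S} A {X} env t.

Definition is_hom (S : signature) (A B : algebra S) (h : A -> B) : Prop :=
  forall (f : sym S) (args : 'I_(ar f) -> A), h (op A f args) = op B f (fun i => h (args i)).

Definition bijective_fun (X Y : Type) (h : X -> Y) : Prop :=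
  (forall x y, h x = h y -> x = y) /\ (forall y, exists x, h x = y).

Definition isomorphic (S : signature) (A B : algebra S) : Prop :=
  exists h : A -> B, is_hom h /\ bijective_fun h.

Definition subuniverse (S : signature) (A : algebra S) (X : A -> Prop) : Prop :=
  forall (f : sym S) (args : 'I_(ar f) -> A), (forall i, X (args i)) -> X (op A f args).

Definition subalg (S : signature) (A : algebra S) (X : A -> Prop)
  (HX : subuniverse X) : algebra S :=
  @Algebra S {x : A | X x}
    (fun f args => exist _ (op A f (fun i => proj1_sig (args i)))
                           (HX f _ (fun i => proj2_sig (args i)))).

Definition prod_alg (S : signature) (I : Type) (B : I -> algebra S) : algebra S :=
  @Algebra S (forall i : I, B i) (fun f args => fun i => op (B i) f (fun k => args k i)).

Definition closed_I (S : signature) (K : algebra S -> Prop) : Prop :=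
  forall A B : algebra S, K A -> isomorphic A B -> K B.
Definition closed_S (S : signature) (K : algebra S -> Prop) : Prop :=
  forall (A : algebra S) (X : A -> Prop) (HX : subuniverse X), K A -> K (subalg HX).
Definition closed_P (S : signature) (K : algebra S -> Prop) : Prop :=
  forall (I : Type) (B : I -> algebra S), (forall i, K (B i)) -> K (prod_alg B).
Definition prevariety (S : signature) (K : algebra S -> Prop) : Prop :=
  closed_I K /\ closed_S K /\ closed_P K.

Definition models (S : signature) (E : term S nat -> term S nat -> Prop)
  (A : algebra S) : Prop :=
  forall l r, E l r -> forall env : nat -> A, eval A env l = eval A env r.

Section Loc.
Variables (S : signature) (e : term S 'I_1).

Definition eA (A : algebra S) (a : A) : A := eval A (fun _ => a) e.

(* The signature of e(A): one symbol "e t" for each term t, with arity n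
   when t is a term in variables x_1..x_n (encoded as 'I_n). *)
Definition loc_sig : signature :=
  @Signature {n : nat & term S 'I_n} (fun s => projT1 s).

Definition loc_carrier (A : algebra S) : Type := {x : A | exists a, x = eA a}.

Definition loc (A : algebra S) : algebra loc_sig :=
  @Algebra loc_sig (loc_carrier A)
    (fun s args =>
       exist _ (eA (eval A (fun i => proj1_sig (args i)) (projT2 s)))
         (ex_intro _ _ erefl)).

Definition separates (A : algebra S) : Prop :=
  forall a b : A, a <> b ->
    exists g : term S 'I_1, eA (eval A (fun _ => a) g) <> eA (eval A (fun _ => b) g).

(* e is dense for A: A is generated by e(A), i.e. the smallest subuniverse
   containing e(A) is all of A *)
Definition dense (A : algebra S) : Prop :=
  forall X : A -> Prop, subuniverse X -> (forall a, X (eA a)) -> forall x, X x.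

Definition loc_class (K : algebra S -> Prop) : algebra loc_sig -> Prop :=
  fun B => exists A, K A /\ isomorphic B (loc A).
End Loc.

(* Main.v *)
Require Import Defs.
From mathcomp Require Import ssreflect ssrfun ssrbool eqtype ssrnat fintype.
From Stdlib Require Import Classical ClassicalEpsilon FunctionalExtensionality ProofIrrelevance.
Set Implicit Arguments.
Unset Strict Implicit.

Fixpoint rename (S : signature) X Y (r : X -> Y) (t : term S X) : term S Y :=
  match t with Var x => Var (r x) | App f args => App f (fun i => rename r (args i)) end.
Fixpoint subst (S : signature) X Y (s : X -> term S Y) (t : term S X) : term S Y :=
  match t with Var x => s x | App f args => App f (fun i => subst s (args i)) end.

Lemma eval_rename (S : signature) (A : algebra S) X Y (r : X -> Y) (env : Y -> A) t :
  eval A env (rename r t) = eval A (fun x => env (r x)) t.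
Proof. elim: t => //= f args IH; congr (op A f); apply: functional_extensionality => i; exact: IH. Qed.

Lemma eval_subst (S : signature) (A : algebra S) X Y (s : X -> term S Y) (env : Y -> A) t :
  eval A env (subst s t) = eval A (fun x => eval A env (s x)) t.
Proof. elim: t => //= f args IH; congr (op A f); apply: functional_extensionality => i; exact: IH. Qed.

Lemma hom_eval (S : signature) (A B : algebra S) (h : A -> B) X (env : X -> A) t :
  is_hom h -> h (eval A env t) = eval B (fun x => h (env x)) t.
Proof. move=> hh; elim: t => //= f args IH; rewrite hh; congr (op B f); apply: functional_extensionality => i; exact: IH. Qed.

Lemma eval_subalg (S : signature) (A : algebra S) (P : A -> Prop) (HP : subuniverse P) X (env : X -> subalg HP) t :
  proj1_sig (eval (subalg HP) env t) = eval A (fun x => proj1_sig (env x)) t.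
Proof. elim: t => //= f args IH; congr (op A f); apply: functional_extensionality => i; exact: IH. Qed.

Lemma eval_prod (S : signature) I (B : I -> algebra S) X (env : X -> prod_alg B) t i :
  eval (prod_alg B) env t i = eval (B i) (fun x => env x i) t.
Proof. elim: t => //= f args IH; congr (op (B i) f); apply: functional_extensionality => k; exact: IH. Qed.

Lemma sig_eq T (P : T -> Prop) (x y : {a | P a}) : proj1_sig x = proj1_sig y -> x = y.
Proof. case: x => x px; case: y => y py /= E; subst y; f_equal; apply: proof_irrelevance. Qed.

Lemma combine (S : signature) (f : sym S) (n : 'I_(ar f) -> nat) (t : forall i, term S 'I_(n i)) :
  { T : term S 'I_#|{: {i : 'I_(ar f) & 'I_(n i)}}| |
    forall (C : algebra S) (env : forall i, 'I_(n i) -> C),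
      eval C (fun r => env (tag (enum_val r)) (tagged (enum_val r))) T
      = op C f (fun i => eval C (env i) (t i)) }.
Proof.
exists (App f (fun i => rename (fun j => enum_rank (Tagged (fun i => 'I_(n i)) j)) (t i))).
move=> C env /=; congr (op C f); apply: functional_extensionality => i.
rewrite eval_rename; congr (eval C _ _); apply: functional_extensionality => j.
by rewrite enum_rankK.
Qed.

Lemma iso_refl (S : signature) (A : algebra S) : isomorphic A A.
Proof. exists id; split => //; split => //; move=> y; by exists y. Qed.

Lemma iso_trans (S : signature) (A B C : algebra S) :
  isomorphic A B -> isomorphic B C -> isomorphic A C.
Proof.
move=> [h [hh [hi hs]]] [g [gh [gi gs]]]; exists (fun x => g (h x)); split.
  by move=> f args /=; rewrite hh gh.
split; first by move=> x y /gi /hi.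
move=> z; case: (gs z) => y <-; case: (hs y) => x <-; by exists x.
Qed.

Lemma iso_sym (S : signature) (A B : algebra S) : isomorphic A B -> isomorphic B A.
Proof.
move=> [h [hh [hi hs]]].
pose g y := proj1_sig (constructive_indefinite_description _ (hs y)).
have hg y : h (g y) = y by rewrite /g; case: constructive_indefinite_description.
exists g; split.
  move=> f args; apply: hi; rewrite hh hg; congr (op B f).
  by apply: functional_extensionality => i; rewrite hg.
split; first by move=> x y E; rewrite -(hg x) -(hg y) E.
move=> x; exists (h x); apply: hi; by rewrite hg.
Qed.

Definition SSp (S : signature) (E : term S nat -> term S nat -> Prop) (e : term S 'I_1) (A : algebra S) :=
  models E A /\ separates e A.

Lemma eA_subalg (S : signature) (e : term S 'I_1) (A : algebra S) (P : A -> Prop) (HP : subuniverse P) (a : subalg HP) :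
  proj1_sig (eA e a) = eA e (proj1_sig a).
Proof. by rewrite /eA eval_subalg. Qed.

Lemma SS_subalg (S : signature) E (e : term S 'I_1) (A : algebra S) (P : A -> Prop) (HP : subuniverse P) :
  SSp E e A -> SSp E e (subalg HP).
Proof.
move=> [mA sA]; split.
  move=> l r lr env; apply: sig_eq; rewrite !eval_subalg; exact: mA.
move=> a b ab.
have ab' : proj1_sig a <> proj1_sig b by move=> E'; apply: ab; apply: sig_eq.
case: (sA _ _ ab') => g Hg; exists g => E'; apply: Hg.
move: (f_equal (@proj1_sig _ _) E'); rewrite !eA_subalg; exact.
Qed.

Definition Gen (S : signature) (e : term S 'I_1) (A : algebra S) (P : loc e A -> Prop) (a : A) : Prop :=
  exists n (t : term S 'I_n) (xs : 'I_n -> loc e A),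
    (forall j, P (xs j)) /\ a = eval A (fun j => proj1_sig (xs j)) t.

Lemma gen_sig (S : signature) (e : term S 'I_1) (A : algebra S) (P : loc e A -> Prop) (a : A) :
  Gen P a -> {n : nat & {t : term S 'I_n & {xs : 'I_n -> loc e A |
    (forall j, P (xs j)) /\ a = eval A (fun j => proj1_sig (xs j)) t}}}.
Proof.
move=> H; apply constructive_indefinite_description in H; case: H => n H.
apply constructive_indefinite_description in H; case: H => t H.
apply constructive_indefinite_description in H; case: H => xs H.
by exists n, t, xs.
Qed.

Lemma Gen_sub (S : signature) (e : term S 'I_1) (A : algebra S) (P : loc e A -> Prop) :
  subuniverse (Gen P).
Proof.
move=> f args H.
pose H' i := gen_sig (H i).
pose n i := projT1 (H' i).
pose t i : term S 'I_(n i) := projT1 (projT2 (H' i)).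
pose xs i : 'I_(n i) -> loc e A := proj1_sig (projT2 (projT2 (H' i))).
have Hx i : (forall j, P (xs i j)) /\ args i = eval A (fun j => proj1_sig (xs i j)) (t i).
  exact: (proj2_sig (projT2 (projT2 (H' i)))).
case: (combine t) => T HT.
exists _, T, (fun r => xs (tag (enum_val r)) (tagged (enum_val r))); split.
  by move=> r; case: (Hx (tag (enum_val r))) => Hp _; apply: Hp.
rewrite (HT A (fun i j => proj1_sig (xs i j))); congr (op A f).
by apply: functional_extensionality => i; case: (Hx i).
Qed.

Arguments Gen_sub {S e A} P.

Lemma loc_gen_iso (S : signature) (e : term S 'I_1) (A : algebra S)
  (hid : forall a : A, eA e (eA e a) = eA e a)
  (P : loc e A -> Prop) (HP : subuniverse P) :
  isomorphic (loc e (subalg (Gen_sub P))) (subalg HP).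
Proof.
have pfA (z : loc e (subalg (Gen_sub P))) : exists a, proj1_sig (proj1_sig z) = eA e a.
  case: z => b [c Hc] /=; exists (proj1_sig c); rewrite Hc; exact: eA_subalg.
have pfP (z : loc e (subalg (Gen_sub P))) : P (exist _ (proj1_sig (proj1_sig z)) (pfA z)).
  case: z => b [c Hc] /=.
  case: c Hc => c0 [n [t [xs [Pxs Ec]]]] Hc.
  have -> : (exist _ (proj1_sig b) (pfA (exist _ b (ex_intro _ _ Hc))) : loc e A)
            = op (loc e A) (existT _ n t) xs.
    apply: sig_eq => /=; rewrite Hc eA_subalg /= Ec //.
  exact: HP.
exists (fun z => exist _ (exist _ _ (pfA z)) (pfP z)); split.
  move=> s args; apply: sig_eq; apply: sig_eq => /=.
  rewrite eA_subalg eval_subalg //.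
split.
  move=> x y Exy; apply: sig_eq; apply: sig_eq.
  exact: (f_equal (fun w => proj1_sig (proj1_sig w)) Exy).
move=> [[y0 [a Ha]] Py].
have Gy : Gen P y0.
  exists 1, (Var ord0), (fun _ => exist _ y0 (ex_intro _ a Ha)); split => //.
pose b : subalg (Gen_sub P) := exist _ y0 Gy.
have Eb : b = eA e b.
  apply: sig_eq; rewrite eA_subalg /= Ha hid //.
exists (exist _ b (ex_intro _ b Eb)); apply: sig_eq; apply: sig_eq => //.
Qed.

Lemma gen_dense (S : signature) (e : term S 'I_1) (A : algebra S)
  (hid : forall a : A, eA e (eA e a) = eA e a) :
  dense e (subalg (Gen_sub (fun _ : loc e A => True))).
Proof.
move=> X HX He.
have claim : forall n (t : term S 'I_n) (xs : 'I_n -> loc e A) pf,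
    X (exist _ (eval A (fun j => proj1_sig (xs j)) t) pf).
  move=> n; elim => [j|f args IH] xs pf.
    rewrite /= in pf *; move: pf; case: (xs j) => y [z Hz] pf /=.
    have Gy : Gen (fun _ : loc e A => True) y.
      exists 1, (Var ord0), (fun _ => exist _ y (ex_intro _ z Hz)); split => //.
    have -> : exist _ y pf = eA e (exist _ y Gy : subalg (Gen_sub (fun _ : loc e A => True))).
      apply: sig_eq; rewrite eA_subalg /= Hz hid //.
    exact: He.
  have Gi i : Gen (fun _ : loc e A => True) (eval A (fun j => proj1_sig (xs j)) (args i)).
    by exists n, (args i), xs.
  have -> : exist _ _ pf = op (subalg (Gen_sub (fun _ : loc e A => True))) f
                           (fun i => exist _ _ (Gi i)).
    by apply: sig_eq.
  apply: HX => i; exact: IH.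
move=> [a pf]; have := pf; case=> n [t [xs [_ Ea]]]; subst a; exact: claim.
Qed.

Lemma subalgT_iso (S : signature) (e : term S 'I_1) (A : algebra S)
  (HT : subuniverse (fun _ : loc e A => True)) : isomorphic (subalg HT) (loc e A).
Proof.
exists (fun x => proj1_sig x); split; first by move=> f args; apply: sig_eq.
split; first by move=> x y; apply: sig_eq.
by move=> y; exists (exist _ y I).
Qed.

Lemma subalg_transfer (S : signature) (A L : algebra S) (g : L -> A) (hg : is_hom g)
  (bg : bijective_fun g) (X : A -> Prop) (HX : subuniverse X) :
  { HY : subuniverse (fun y => X (g y)) | isomorphic (subalg HY) (subalg HX) }.
Proof.
have HY : subuniverse (fun y => X (g y)).
  by move=> f args H /=; rewrite hg; apply: HX.
exists HY; exists (fun y : subalg HY => (exist _ (g (proj1_sig y)) (proj2_sig y) : subalg HX)); split.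
  by move=> f args; apply: sig_eq => /=; rewrite hg.
case: bg => gi gs; split.
  by move=> x y E; apply: sig_eq; apply: gi; exact: (f_equal (@proj1_sig _ _) E).
move=> [x Xx]; case: (gs x) => y Ey; subst x.
by exists (exist _ y Xx); apply: sig_eq.
Qed.

Lemma prod_iso (S : signature) I (B C : I -> algebra S) :
  (forall i, isomorphic (B i) (C i)) -> isomorphic (prod_alg B) (prod_alg C).
Proof.
move=> H.
pose h i := proj1_sig (constructive_indefinite_description _ (H i)).
have hh i : is_hom (h i) /\ bijective_fun (h i).
  by rewrite /h; case: constructive_indefinite_description.
exists (fun (x : prod_alg B) => (fun i => h i (x i)) : prod_alg C); split.
  move=> f args; apply: functional_extensionality_dep => i /=.
  by case: (hh i) => -> _.
split.
  move=> x y E; apply: functional_extensionality_dep => i.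
  case: (hh i) => _ [hi _]; apply: hi; exact: (f_equal (fun w => w i) E).
move=> y.
exists (fun i => proj1_sig (constructive_indefinite_description _ (proj2 (proj2 (hh i)) (y i)))).
apply: functional_extensionality_dep => i /=.
by case: constructive_indefinite_description.
Qed.

Lemma eA_prod (S : signature) (e : term S 'I_1) I (A : I -> algebra S) (x : prod_alg A) i :
  eA e x i = eA e (x i).
Proof. by rewrite /eA eval_prod. Qed.

Lemma prod_SS (S : signature) E (e : term S 'I_1) I (A : I -> algebra S) :
  (forall i, SSp E e (A i)) -> SSp E e (prod_alg A).
Proof.
move=> H; split.
  move=> l r lr env; apply: functional_extensionality_dep => i.
  rewrite !eval_prod; case: (H i) => m _; exact: m.
move=> a b ab.
have [i abi] : exists i, a i <> b i.
  apply: NNPP => N; apply: ab; apply: functional_extensionality_dep => i.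
  apply: NNPP => N'; apply: N; by exists i.
case: (H i) => _ s; case: (s _ _ abi) => g Hg; exists g => E'; apply: Hg.
have := f_equal (fun w => w i) E'; rewrite !eA_prod !eval_prod; exact.
Qed.

Lemma loc_prod (S : signature) (e : term S 'I_1) I (A : I -> algebra S)
  (hid : forall i (a : A i), eA e (eA e a) = eA e a) :
  isomorphic (prod_alg (fun i => loc e (A i))) (loc e (prod_alg A)).
Proof.
have pf (z : prod_alg (fun i => loc e (A i))) :
    exists a : prod_alg A, (fun i => proj1_sig (z i)) = eA e a.
  exists (fun i => proj1_sig (z i)); apply: functional_extensionality_dep => i.
  rewrite eA_prod /=; case: (z i) => y [a Ha] /=; by rewrite Ha hid.
exists (fun z => (exist _ (fun i => proj1_sig (z i)) (pf z) : loc e (prod_alg A))); split.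
  move=> s args; apply: sig_eq; apply: functional_extensionality_dep => i /=.
  by rewrite eA_prod eval_prod.
split.
  move=> x y E'; apply: functional_extensionality_dep => i; apply: sig_eq.
  exact: (f_equal (fun w => proj1_sig w i) E').
move=> [x Hx].
have Hi i : exists a, x i = eA e a.
  case: Hx => a ->; exists (a i); exact: eA_prod.
by exists (fun i => exist _ (x i) (Hi i)); apply: sig_eq.
Qed.

Lemma wd (S : signature) (e : term S 'I_1) (A B : algebra S) (sB : separates e B)
  (f : loc e A -> loc e B) (hf : is_hom f) n (t : term S 'I_n) (xs : 'I_n -> loc e A)
  m (s : term S 'I_m) (ys : 'I_m -> loc e A) :
  eval A (fun j => proj1_sig (xs j)) t = eval A (fun j => proj1_sig (ys j)) s ->
  eval B (fun j => proj1_sig (f (xs j))) t = eval B (fun j => proj1_sig (f (ys j))) s.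
Proof.
move=> H; apply: NNPP => ne; case: (sB _ _ ne) => g Hg; apply: Hg.
have key : forall n (t : term S 'I_n) (xs : 'I_n -> loc e A),
  eA e (eval B (fun _ => eval B (fun j => proj1_sig (f (xs j))) t) g)
  = proj1_sig (f (exist _ (eA e (eval A (fun _ => eval A (fun j => proj1_sig (xs j)) t) g))
                  (ex_intro _ _ erefl))).
  move=> k u zs.
  have E1 := hf (existT _ k (subst (fun _ => u) g)) zs.
  have E2 : op (loc e A) (existT _ k (subst (fun _ => u) g)) zs
    = exist _ (eA e (eval A (fun _ => eval A (fun j => proj1_sig (zs j)) u) g)) (ex_intro _ _ erefl).
    by apply: sig_eq; rewrite /= eval_subst.
  by rewrite -E2 E1 /= eval_subst.
rewrite !key; congr (proj1_sig (f _)); apply: sig_eq => /=; by rewrite H.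
Qed.

Theorem theorem2p3 (S : signature) (E : term S nat -> term S nat -> Prop)
  (e : term S 'I_1)
  (he : forall A : algebra S, models E A -> forall a : A, eA e (eA e a) = eA e a) :
  let SS := fun A : algebra S => models E A /\ separates e A in
  let DD := fun A : algebra S => SS A /\ dense e A in
  (* (1) *)
  ((forall B, loc_class e DD B <-> loc_class e SS B) /\ prevariety (loc_class e SS)) /\
  (* (2) the localization functor D -> e(D) is an equivalence *)
  ((* well-defined on morphisms: phi restricts to a hom e(A) -> e(B) *)
   (forall (A B : algebra S), DD A -> DD B -> forall phi : A -> B, is_hom phi ->
      exists f : loc e A -> loc e B, is_hom f /\
        forall x : loc e A, proj1_sig (f x) = phi (proj1_sig x)) /\
   (* faithful *)
   (forall (A B : algebra S), DD A -> DD B -> forall phi psi : A -> B,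
      is_hom phi -> is_hom psi ->
      (forall x : loc e A, phi (proj1_sig x) = psi (proj1_sig x)) ->
      forall a, phi a = psi a) /\
   (* full *)
   (forall (A B : algebra S), DD A -> DD B -> forall f : loc e A -> loc e B,
      is_hom f -> exists phi : A -> B, is_hom phi /\
        forall x : loc e A, phi (proj1_sig x) = proj1_sig (f x)) /\
   (* essentially surjective onto e(D) *)
   (forall C, loc_class e DD C -> exists A, DD A /\ isomorphic C (loc e A))).
Proof.
move=> SS DD.
have HT A : subuniverse (fun _ : loc e A => True) by [].
split; [split; [move=> B; split|split; [|split]] | split; [|split; [|split]]].
- by case=> A [[sA _] iso]; exists A.
- case=> A [sA iso].
  pose A' := subalg (Gen_sub (fun _ : loc e A => True)).
  exists A'; split; [split|].
  + exact: (SS_subalg _ sA).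
  + apply: gen_dense; apply: he; by case: sA.
  + apply: (iso_trans iso); apply: iso_sym.
    apply: (iso_trans (loc_gen_iso _ (HT A))); first by apply: he; case: sA.
    exact: subalgT_iso.
- move=> A B [A0 [sA0 iso]] iAB; exists A0; split => //.
  exact: (iso_trans (iso_sym iAB) iso).
- move=> A' X HX [A [sA iso]].
  case: (iso_sym iso) => g [hg bg].
  case: (subalg_transfer hg bg HX) => HY isoY.
  exists (subalg (Gen_sub (fun y => X (g y)))); split; first exact: SS_subalg.
  apply: iso_sym; apply: (iso_trans _ isoY).
  apply: loc_gen_iso; apply: he; by case: sA.
- move=> I B HB.
  have HB' i : {A | SS A /\ isomorphic (B i) (loc e A)}.
    by apply: constructive_indefinite_description; case: (HB i) => A H; exists A.
  pose A i := proj1_sig (HB' i).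
  have sA i : SS (A i) by rewrite /A; case: (HB' i) => ? [].
  have iA i : isomorphic (B i) (loc e (A i)) by rewrite /A; case: (HB' i) => ? [].
  exists (prod_alg A); split; first exact: prod_SS.
  apply: (iso_trans (prod_iso iA)); apply: loc_prod => i; apply: he; by case: (sA i).
- move=> A B _ _ phi hphi.
  have pf (x : loc e A) : exists b, phi (proj1_sig x) = eA e b.
    case: x => x [a Ha] /=; exists (phi a); rewrite Ha /eA hom_eval //.
  exists (fun x => (exist _ (phi (proj1_sig x)) (pf x) : loc e B)); split => //.
  move=> s args; apply: sig_eq => /=; rewrite /eA !hom_eval //.
- move=> A B [_ dA] _ phi psi hphi hpsi H.
  apply: dA; last by move=> a; exact: (H (exist _ _ (ex_intro _ a erefl))).
  by move=> f args Hargs; rewrite hphi hpsi; congr (op B f); apply: functional_extensionality.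
- move=> A B [[mA _] dA] [[_ sB] _] f hf.
  have G a : Gen (fun _ : loc e A => True) a.
    apply: (dA _ (Gen_sub _)) => b.
    by exists 1, (Var ord0), (fun _ => exist _ (eA e b) (ex_intro _ b erefl)).
  pose r a := gen_sig (G a).
  pose phi a := eval B (fun j => proj1_sig (f (proj1_sig (projT2 (projT2 (r a))) j))) (projT1 (projT2 (r a))).
  have spec a n (t : term S 'I_n) (xs : 'I_n -> loc e A) :
      a = eval A (fun j => proj1_sig (xs j)) t -> phi a = eval B (fun j => proj1_sig (f (xs j))) t.
    move=> Ha; rewrite /phi; case: (r a) => n' [t' [xs' [_ Ha']]] /=.
    apply: (wd sB hf); by rewrite -Ha -Ha'.
  exists phi; split.
  + move=> f0 args.
    pose n i := projT1 (r (args i)).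
    pose t i : term S 'I_(n i) := projT1 (projT2 (r (args i))).
    pose xs i : 'I_(n i) -> loc e A := proj1_sig (projT2 (projT2 (r (args i)))).
    have Hx i : args i = eval A (fun j => proj1_sig (xs i j)) (t i).
      exact: (proj2 (proj2_sig (projT2 (projT2 (r (args i)))))).
    case: (combine t) => T HC.
    have EA : op A f0 args = eval A (fun r => proj1_sig (xs (tag (enum_val r)) (tagged (enum_val r)))) T.
      rewrite (HC A (fun i j => proj1_sig (xs i j))); congr (op A f0).
      by apply: functional_extensionality => i; exact: Hx.
    rewrite (spec _ _ T _ EA).
    rewrite (HC B (fun i j => proj1_sig (f (xs i j)))); congr (op B f0).
  + move=> x; exact: (spec _ 1 (Var ord0) (fun _ => x)).
- by [].
Qed.
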